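(* Let $\tau$ be an infinitesimal bending of an isometric immersion $f\colon M^n\to\mathbb{R}^{n+p}$. Then at every point of $M^n$ the bilinear form $\theta\colon TM\times TM\to N_fM\oplus N_fM$ defined by $$\theta(X,Y)=(\alpha(X,Y)+\beta(X,Y),\ \alpha(X,Y)-\beta(X,Y))$$ is flat with respect to the indefinite inner product $\langle\!\langle(\xi_1,\eta_1),(\xi_2,\eta_2)\rangle\!\rangle=\langle\xi_1,\xi_2\rangle-\langle\eta_1,\eta_2\rangle$ on $N_fM\oplus N_fM$.
   Context: $\alpha$ is the second fundamental form of $f$ and $N_fM$ its normal bundle. An infinitesimal bending of $f$ is a smooth map $\tau\colon M^n\to\mathbb{R}^{n+p}$ with $\langle f_*X,\tilde\nabla_X\tau\rangle=0$ for all tangent $X$, $\tilde\nabla$ the Euclidean connection. Set $LX=\tilde\nabla_X\tau$ and $B(X,Y)=\tilde\nabla_X(LY)-L\nabla_XY$; $\beta(X,Y)$ is the component of $B(X,Y)$ normal to $f$. A bilinear form $\mathcal{B}\colon V\times U\to W$ into a space with an (possibly indefinite) inner product is flat if $\langle\mathcal{B}(X,Z),\mathcal{B}(Y,W)\rangle-\langle\mathcal{B}(X,W),\mathcal{B}(Y,Z)\rangle=0$ for all $X,Y\in V$, $Z,W\in U$. *)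

(* Defs.v *)
(* Local (chart) formalization:
   M^n is represented by an open set U of R^n (row vectors 'rV[R]_n) and the
   metric on M is the one induced by f (isometric immersion). *)
From HB Require Import structures.
From mathcomp Require Import all_boot all_order all_algebra.
From mathcomp Require Import all_classical all_reals all_analysis.
Set Implicit Arguments. Unset Strict Implicit. Unset Printing Implicit Defensive.
Import Order.TTheory GRing.Theory Num.Theory.
Import numFieldNormedType.Exports.
Local Open Scope classical_set_scope.
Local Open Scope ring_scope.

Section Defs.
Variable R : realType.

Definition dot (m : nat) (u v : 'rV[R]_m) : R := \sum_(i < m) u ord0 i * v ord0 i.

Fixpoint Dn (n m : nat) (vs : seq 'rV[R]_n) (g : 'rV[R]_n -> 'rV[R]_m)
  : 'rV[R]_n -> 'rV[R]_m :=
  match vs with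
  | [::] => g
  | v :: vs' => fun x => derive (Dn vs' g) x v
  end.

(* smoothness (C^infinity) on U: every iterated directional derivative is
   differentiable at every point of U. *)
Definition smooth_on (n m : nat) (U : set 'rV[R]_n) (g : 'rV[R]_n -> 'rV[R]_m) :=
  forall (vs : seq 'rV[R]_n) x, U x -> differentiable (Dn vs g) x.

Definition immersion_on (n m : nat) (U : set 'rV[R]_n) (f : 'rV[R]_n -> 'rV[R]_m) :=
  forall x, U x -> forall v : 'rV[R]_n, derive f x v = 0 -> v = 0.

Definition inf_bending (n m : nat) (U : set 'rV[R]_n) (f tau : 'rV[R]_n -> 'rV[R]_m) :=
  forall x, U x -> forall X : 'rV[R]_n, dot (derive f x X) (derive tau x X) = 0.

Section Point.
Variables (n m : nat) (f tau : 'rV[R]_n -> 'rV[R]_m) (x : 'rV[R]_n).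

Definition jac : 'M[R]_(n, m) :=
  \matrix_(i < n, j < m) derive f x (delta_mx 0 i) ord0 j.

(* coordinates (w.r.t. e_1..e_n) of the tangent part of w in f_*T_xM *)
Definition tan_coord (w : 'rV[R]_m) : 'rV[R]_n :=
  w *m jac^T *m invmx (jac *m jac^T).

Definition tan_part (w : 'rV[R]_m) : 'rV[R]_m := tan_coord w *m jac.
Definition nor_part (w : 'rV[R]_m) : 'rV[R]_m := w - tan_part w.

(* second derivative: D_X (D_Y g) at x (X, Y extended as constant fields) *)
Definition D2 (g : 'rV[R]_n -> 'rV[R]_m) (X Y : 'rV[R]_n) : 'rV[R]_m :=
  derive (fun y => derive g y Y) x X.

(* Levi-Civita connection of the induced metric (coordinates), for X, Y
   constant coordinate fields: f_*(nabla_X Y) = tangent part of D_X f_* Y. *)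
Definition nablaXY (X Y : 'rV[R]_n) : 'rV[R]_n := tan_coord (D2 f X Y).

Definition sff (X Y : 'rV[R]_n) : 'rV[R]_m := nor_part (D2 f X Y).

Definition Bform (X Y : 'rV[R]_n) : 'rV[R]_m :=
  D2 tau X Y - derive tau x (nablaXY X Y).

Definition beta (X Y : 'rV[R]_n) : 'rV[R]_m := nor_part (Bform X Y).

Definition theta (X Y : 'rV[R]_n) : 'rV[R]_m * 'rV[R]_m :=
  (sff X Y + beta X Y, sff X Y - beta X Y).

End Point.

Definition ip2 (m : nat) (a b : 'rV[R]_m * 'rV[R]_m) : R :=
  dot a.1 b.1 - dot a.2 b.2.

End Defs.

Definition flat (R : ringType) (V U W : Type) (B : V -> U -> W) (ip : W -> W -> R) :=
  forall (X Y : V) (Z Wv : U), ip (B X Z) (B Y Wv) - ip (B X Wv) (B Y Z) = 0.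

(* Main.v *)
Require Import Defs.
From HB Require Import structures.
From mathcomp Require Import all_boot all_order all_algebra.
From mathcomp Require Import all_classical all_reals all_analysis.
Import Order.TTheory GRing.Theory Num.Theory.
Import numFieldNormedType.Exports.
Local Open Scope classical_set_scope.
Local Open Scope ring_scope.
From mathcomp Require Import ring lra.

Section Schwarz.
Variables (R : realType) (n : nat).
Local Notation V := 'rV[R]_n.

Lemma line_derive (k : V -> R) (c X : V) (t : R) :
  derivable k (c + t *: X) X ->
  is_derive t 1 (fun s => k (c + s *: X)) (derive k (c + t *: X) X).
Proof.
move=> dk.
have E : (fun h : R => h^-1 *: (((fun s => k (c + s *: X)) \o shift t) (h *: 1)
            - (fun s => k (c + s *: X)) t)) =
         (fun h => h^-1 *: ((k \o shift (c + t *: X)) (h *: X) - k (c + t *: X))).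
  apply/funext => h /=.
  by rewrite [h *: 1]mulr1 scalerDl addrCA addrC.
apply: DeriveDef; first by rewrite /derivable E.
by rewrite /derive E.
Qed.


Lemma oo_cc {a b t : R} : t \in `]a, b[ -> a <= t <= b.
Proof. by rewrite in_itv /= => /andP[/ltW -> /ltW ->]. Qed.

Lemma cc_cc {a b t : R} : t \in `[a, b] -> a <= t <= b.
Proof. by rewrite in_itv /=. Qed.

Lemma mixed_mvt (h : V -> R) (S : set V) (y X Y : V) (s : R) : 0 < s ->
  (forall t r, 0 <= t <= s -> 0 <= r <= s -> S (y + t *: X + r *: Y)) ->
  (forall z, S z -> derivable h z X) ->
  (forall z, S z -> derivable (fun w => derive h w X) z Y) ->
  exists t r, [/\ 0 <= t <= s, 0 <= r <= s &
    h (y + s *: X + s *: Y) - h (y + s *: X) - h (y + s *: Y) + h y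
      = s * s * derive (fun w => derive h w X) (y + t *: X + r *: Y) Y].
Proof.
move=> s0 HS dh dhX.
have Ss t : 0 <= t <= s -> S (y + s *: Y + t *: X).
  by move=> ht; rewrite addrAC; apply: HS => //; rewrite (ltW s0) lexx.
have S0 t : 0 <= t <= s -> S (y + t *: X).
  by move=> ht; rewrite -[y + _]addr0 -(scale0r Y); apply: HS => //; rewrite (ltW s0) lexx.
set u := fun t => h (y + s *: Y + t *: X) - h (y + t *: X).
have du t : 0 <= t <= s -> is_derive t 1 u
   (derive h (y + s *: Y + t *: X) X - derive h (y + t *: X) X).
  move=> ht; apply: is_deriveB.
    by apply: line_derive; apply: dh; apply: Ss.
  by apply: line_derive; apply: dh; apply: S0.
have cu : {within `[0, s], continuous u}.
  by apply: derivable_within_continuous => t /cc_cc /du [].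
have [c1 c1in E1] := @MVT R u (fun t => derive h (y + s *: Y + t *: X) X - derive h (y + t *: X) X) 0 s s0
   (fun t tin => du t (oo_cc tin)) cu.
have c1s := oo_cc c1in.
set v := fun r => derive h (y + c1 *: X + r *: Y) X.
have dv r : 0 <= r <= s -> is_derive r 1 v
   (derive (fun w => derive h w X) (y + c1 *: X + r *: Y) Y).
  move=> hr; apply: (@line_derive (fun w => derive h w X)).
  by apply: dhX; apply: HS.
have cv : {within `[0, s], continuous v}.
  by apply: derivable_within_continuous => t /cc_cc /dv [].
have [c2 c2in E2] := @MVT R v _ 0 s s0 (fun t tin => dv t (oo_cc tin)) cv.
exists c1, c2; split => //; first exact: oo_cc c2in.
have -> : y + s *: X + s *: Y = y + s *: Y + s *: X by rewrite addrAC.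
have E3 : h (y + s *: Y + s *: X) - h (y + s *: X) - h (y + s *: Y) + h y = u s - u 0.
  by rewrite /u !scale0r !addr0; ring.
rewrite E3 E1 subr0 /v in E2 *.
have -> : y + s *: Y + c1 *: X = y + c1 *: X + s *: Y by rewrite addrAC.
rewrite scale0r addr0 in E2.
rewrite E2; ring.
Qed.

Lemma schwarz_scalar (h : V -> R) (U : set V) (y X Y : V) :
  open U -> U y ->
  (forall z v, U z -> derivable h z v) ->
  (forall z v, U z -> derivable (fun w => derive h w X) z v) ->
  (forall z v, U z -> derivable (fun w => derive h w Y) z v) ->
  (forall e, 0 < e -> \forall z \near y,
     `|derive (fun w => derive h w X) y Y - derive (fun w => derive h w X) z Y| < e) ->
  (forall e, 0 < e -> \forall z \near y,
     `|derive (fun w => derive h w Y) y X - derive (fun w => derive h w Y) z X| < e) ->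
  derive (fun w => derive h w X) y Y = derive (fun w => derive h w Y) y X.
Proof.
move=> oU Uy dh dhX dhY cA cB.
set fA := fun z => derive (fun w => derive h w X) z Y.
set fB := fun z => derive (fun w => derive h w Y) z X.
change (fA y = fB y).
apply/eqP; rewrite -subr_eq0 -normr_le0; apply/ler_addgt0Pr => e e0; rewrite add0r.
have e20 : 0 < e / 2 by rewrite divr_gt0.
have cA' : \forall z \near y, `|fA y - fA z| < e / 2.
  exact: cA.
have cB' : \forall z \near y, `|fB y - fB z| < e / 2.
  exact: cB.
have N : \forall z \near y, U z /\ `|fA y - fA z| < e / 2 /\ `|fB y - fB z| < e / 2.
  have oUy : \forall z \near y, U z := oU y Uy.
  by apply: (@filterS3 _ _ _ _ _ _ _ _ oUy cA' cB') => z a b c.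
move: N => /nbhs_ballP [d d0 Hd].
set K := `|X| + `|Y| + 1.
have K0 : 0 < K by rewrite /K ltr_wpDl // addr_ge0.
set s := d / 2 / K.
have s0 : 0 < s by rewrite /s !divr_gt0.
have HS t r : 0 <= t <= s -> 0 <= r <= s -> ball y d (y + t *: X + r *: Y).
  move=> /andP[t0 ts] /andP[r0 rs]; rewrite -ball_normE /ball_ /=.
  have -> : y - (y + t *: X + r *: Y) = - (t *: X + r *: Y).
    by rewrite -addrA opprD addrA subrr add0r.
  rewrite normrN (le_lt_trans (ler_normD _ _)) // !normrZ !ger0_norm //.
  have : t * `|X| + r * `|Y| <= s * K.
    rewrite /K mulrDr mulr1 mulrDr; rewrite ler_wpDr ?(ltW s0) //.
    by rewrite lerD // ler_wpM2r.
  move/le_lt_trans; apply.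
  by rewrite /s divfK ?gt_eqF // ltr_pdivrMr // ltr_pMr // ltr1n.
have HS' t r : 0 <= t <= s -> 0 <= r <= s -> ball y d (y + t *: Y + r *: X).
  by move=> ht hr; rewrite addrAC; apply: HS.
have [t1 [r1 [ht1 hr1 E1]]] := mixed_mvt h (ball y d) y X Y s s0 HS
   (fun z bz => dh z X (Hd z bz).1) (fun z bz => dhX z Y (Hd z bz).1).
have [t2 [r2 [ht2 hr2 E2]]] := mixed_mvt h (ball y d) y Y X s s0 HS'
   (fun z bz => dh z Y (Hd z bz).1) (fun z bz => dhY z X (Hd z bz).1).
have E : s * s * fA (y + t1 *: X + r1 *: Y) = s * s * fB (y + t2 *: Y + r2 *: X).
  rewrite /fA /fB -E1 -E2 (addrAC y (s *: Y)); congr (_ + _); exact: addrAC.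
have s00 : s != 0 by exact: lt0r_neq0.
have ss0 : s * s != 0 by rewrite mulf_neq0.
have E' : fA (y + t1 *: X + r1 *: Y) = fB (y + t2 *: Y + r2 *: X).
  by apply: (mulfI ss0).
have [_ [H1 _]] := Hd _ (HS _ _ ht1 hr1).
have [_ [_ H2]] := Hd _ (HS' _ _ ht2 hr2).
have -> : fA y - fB y = (fA y - fA (y + t1 *: X + r1 *: Y)) - (fB y - fB (y + t2 *: Y + r2 *: X)).
  by rewrite E' opprB addrA subrK.
apply: (le_trans (ler_normB _ _)); rewrite [leRHS]splitr.
exact: lerD (ltW H1) (ltW H2).
Qed.

Lemma entry_derive m (G : V -> 'rV[R]_m) z X i j :
  differentiable G z -> derive (fun w => G w i j) z X = derive G z X i j.
Proof. by move=> dG; rewrite (derive_mx (diff_derivable dG)) mxE. Qed.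

Lemma entry_diff m (G : V -> 'rV[R]_m) z i j :
  differentiable G z -> differentiable (fun w => G w i j) z.
Proof.
move=> dG; have := differentiable_comp dG (differentiable_coord (G z) i j).
by [].
Qed.

Lemma entry_derivable m (G : V -> 'rV[R]_m) z v i j :
  differentiable G z -> derivable (fun w => G w i j) z v.
Proof. by move=> dG; apply: diff_derivable; apply: entry_diff. Qed.

Lemma near_entry m (G : V -> 'rV[R]_m) (U : set V) z X i j :
  open U -> (forall w, U w -> differentiable G w) -> U z ->
  {near z, (fun w => derive G w X i j) =1 (fun w => derive (fun w' => G w' i j) w X)}.
Proof.
move=> oU dG Uz.
have oUz : \forall w \near z, U w := oU z Uz.
by apply: (filterS _ oUz) => w Uw /=; rewrite entry_derive //; apply: dG.
Qed.

Lemma Dn_cat m vs ws (g : V -> 'rV[R]_m) : Dn vs (Dn ws g) = Dn (vs ++ ws) g.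
Proof. by elim: vs => //= v vs ->. Qed.

Lemma smooth_Dn m (U : set V) (g : V -> 'rV[R]_m) ws :
  smooth_on U g -> smooth_on U (Dn ws g).
Proof. by move=> sg vs z Uz; rewrite Dn_cat; apply: sg. Qed.

Lemma schwarz m (g : V -> 'rV[R]_m) (U : set V) (y X Y : V) :
  open U -> smooth_on U g -> U y ->
  derive (fun z => derive g z Y) y X = derive (fun z => derive g z X) y Y.
Proof.
move=> oU sg Uy.
have dg w : U w -> differentiable g w := sg [::] w.
have dgX v w : U w -> differentiable (fun z => derive g z v) w := sg [:: v] w.
have dgXY u v w : U w -> differentiable (fun z => derive (fun z' => derive g z' v) z u) w
  := sg [:: u; v] w.
apply/matrixP => i j.
set h := fun w => g w i j.
have E v u w : U w ->
    derive (fun z => derive h z v) w u = derive (fun z => derive g z v) w u i j.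
  move=> Uw; rewrite -(near_eq_derive _ (near_entry _ _ _ _ v i j oU dg Uw)).
  by rewrite entry_derive //; apply: dgX.
have C u v e : 0 < e -> \forall z \near y,
    `|derive (fun w => derive h w v) y u - derive (fun w => derive h w v) z u| < e.
  move=> e0.
  have dF := entry_diff _ _ _ i j (dgXY u v y Uy).
  have cF := differentiable_continuous dF.
  have := (cvgrPdist_lt _ _).1 cF e e0.
  have oUy : \forall w \near y, U w := oU y Uy.
  move=> H; apply: (@filterS2 _ _ _ _ _ _ _ oUy (H _)) => z Uz /=.
  by rewrite !E.
have E1 := E Y X y Uy; have E2 := E X Y y Uy.
apply: (etrans (esym E1)); apply: (etrans _ E2).
apply: (@schwarz_scalar h U y Y X oU Uy); last 2 first.
- exact: C.
- exact: C.
- by move=> z v Uz; apply: entry_derivable; apply: dg.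
- move=> z v Uz; apply: (near_eq_derivable (near_entry _ _ _ _ Y i j oU dg Uz)).
  by apply: entry_derivable; apply: dgX.
- move=> z v Uz; apply: (near_eq_derivable (near_entry _ _ _ _ X i j oU dg Uz)).
  by apply: entry_derivable; apply: dgX.
Qed.

End Schwarz.

Set Implicit Arguments. Unset Strict Implicit.

Section Alg.
Variable R : realType.

Lemma dotE m (u v : 'rV[R]_m) : dot u v = (u *m v^T) 0 0.
Proof. by rewrite /dot mxE; apply: eq_bigr => i _; rewrite mxE. Qed.

Lemma dotC m (u v : 'rV[R]_m) : dot u v = dot v u.
Proof. by rewrite /dot; apply: eq_bigr => i _; rewrite mulrC. Qed.

Lemma dotDl m (u v w : 'rV[R]_m) : dot (u + v) w = dot u w + dot v w.
Proof. by rewrite !dotE mulmxDl mxE. Qed.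

Lemma dotDr m (u v w : 'rV[R]_m) : dot w (u + v) = dot w u + dot w v.
Proof. by rewrite !(dotC w) dotDl. Qed.

Lemma dotNl m (u w : 'rV[R]_m) : dot (- u) w = - dot u w.
Proof. by rewrite !dotE mulNmx mxE. Qed.

Lemma dotNr m (u w : 'rV[R]_m) : dot w (- u) = - dot w u.
Proof. by rewrite !(dotC w) dotNl. Qed.

Lemma dotBl m (u v w : 'rV[R]_m) : dot (u - v) w = dot u w - dot v w.
Proof. by rewrite dotDl dotNl. Qed.

Lemma dotBr m (u v w : 'rV[R]_m) : dot w (u - v) = dot w u - dot w v.
Proof. by rewrite dotDr dotNr. Qed.

Lemma ML n m (J T : 'M[R]_(n, m)) (A1 B1 A2 B2 : 'rV[R]_m) :
  (J *m J^T) \in unitmx ->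
  J *m T^T + T *m J^T = 0 ->
  B1 *m J^T + A1 *m T^T = 0 -> B2 *m J^T + A2 *m T^T = 0 ->
  let iG := invmx (J *m J^T) in
  let N w := w - w *m J^T *m iG *m J in
  let bet A B := N (B - A *m J^T *m iG *m T) in
  dot (N A1) (bet A2 B2) + dot (bet A1 B1) (N A2) = dot A1 B2 + dot B1 A2.
Proof.
move=> uG HK H1 H2 iG N bet.
set P := J^T *m iG *m J.
set S := J^T *m iG *m T.
set Nm := 1%:M - P.
have iGT : iG^T = iG by rewrite /iG trmx_inv trmx_mul trmxK.
have PT : P^T = P by rewrite /P !trmx_mul iGT trmxK mulmxA.
have PP : P *m P = P.
  by rewrite /P !mulmxA -(mulmxA _ J) -(mulmxA _ (J *m J^T)) mulmxV // mulmx1.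
have NmT : Nm^T = Nm by rewrite /Nm linearB /= trmx1 PT.
have NN : Nm *m Nm = Nm by rewrite /Nm mulmxBl mul1mx mulmxBr mulmx1 PP subrr subr0.
have NE w : N w = w *m Nm by rewrite /N /Nm mulmxBr mulmx1 /P !mulmxA.
have betE A B : bet A B = (B - A *m S) *m Nm by rewrite /bet NE /S !mulmxA.
have HB1 : B1 *m J^T = - (A1 *m T^T) by apply/eqP; rewrite -addr_eq0 H1.
have HB2 : B2 *m J^T = - (A2 *m T^T) by apply/eqP; rewrite -addr_eq0 H2.
have HB2t : J *m B2^T = - (T *m A2^T).
  by rewrite -[J]trmxK -trmx_mul HB2 linearN /= trmx_mul trmxK.
have ST : S^T = T^T *m iG *m J by rewrite /S !trmx_mul trmxK iGT mulmxA.
have h1 : B1 *m P = - (A1 *m S^T) by rewrite /P !mulmxA HB1 ST !mulNmx !mulmxA.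
have h2 : P *m B2^T = - (S *m A2^T) by rewrite /P -mulmxA HB2t mulmxN /S mulmxA.
have h3 : P *m S^T + S *m P = 0.
  have : J^T *m iG *m (J *m T^T + T *m J^T) *m iG *m J = 0 by rewrite HK mulmx0 !mul0mx.
  by rewrite mulmxDr mulmxDl mulmxDl ST /P /S !mulmxA.
have e00D (M M' : 'M[R]_1) : (M + M') 0 0 = M 0 0 + M' 0 0 by rewrite mxE.
have e00N (M : 'M[R]_1) : (- M) 0 0 = - M 0 0 by rewrite mxE.
have E1 : (A1 *m P *m B2^T) 0 0 = - (A1 *m S *m A2^T) 0 0.
  by rewrite -mulmxA h2 mulmxN mulmxA mxE.
have E2 : (B1 *m P *m A2^T) 0 0 = - (A1 *m S^T *m A2^T) 0 0.
  by rewrite h1 mulNmx mxE.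
have E3 : (A1 *m P *m S^T *m A2^T) 0 0 + (A1 *m S *m P *m A2^T) 0 0 = 0.
  rewrite -e00D.
  have -> : A1 *m P *m S^T *m A2^T + A1 *m S *m P *m A2^T = A1 *m (P *m S^T + S *m P) *m A2^T.
    by rewrite mulmxDr mulmxDl !mulmxA.
  by rewrite h3 mulmx0 mul0mx mxE.
rewrite !NE !betE !dotE.
have NmE : Nm = 1%:M - P by [].
clearbody Nm.
clearbody S P.
have trB (M M' : 'rV[R]_m) : (M - M')^T = M^T - M'^T by apply: linearB.
rewrite !trmx_mul NmT trB trmx_mul.
rewrite !mulmxA -(mulmxA A1 Nm Nm) NN -(mulmxA (B1 - A1 *m S) Nm Nm) NN.
rewrite NmE !(mulmxBr, mulmxBl, mulmx1, mul1mx) !mulmxA.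
rewrite !(e00D, e00N) E1 E2.
move: E3; set a := (A1 *m P *m S^T *m A2^T) 0 0; set b := (A1 *m S *m P *m A2^T) 0 0.
move=> E3; lra.
Qed.
End Alg.

Lemma lin6 (R : realType) (A B C D E F : R) : A + B + (C + D) = 0 -> A + E + (F + D) = 0 ->
    C + E + (F + B) = 0 -> A + D = 0.
Proof. move=> *; lra. Qed.

Lemma lin4 (R : realType) (P A B C D Q P' Q' : R) : P + A + (B + Q) = 0 -> P' + C + (D + Q') = 0 ->
  P = P' -> Q = Q' -> A + B = C + D.
Proof. move=> *; lra. Qed.

Section Geo.
Variables (R : realType) (n m : nat).
Local Notation V := 'rV[R]_n.

Lemma derivable_entry (G : V -> 'rV[R]_m) z X i j :
  derivable G z X -> derivable (fun w => G w i j) z X.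
Proof. by move=> h; apply: (derivable_mxP G z X).1. Qed.

Lemma entry_derive' (G : V -> 'rV[R]_m) z X i j :
  derivable G z X -> derive (fun w => G w i j) z X = derive G z X i j.
Proof. by move=> h; rewrite (derive_mx h) mxE. Qed.

Lemma dot_fun (u v : V -> 'rV[R]_m) :
  (fun w => dot (u w) (v w)) = \sum_(i < m) ((fun w => u w 0 i) * (fun w => v w 0 i)).
Proof. by apply/funext => w; rewrite fct_sumE /dot. Qed.

Lemma derivable_dot (u v : V -> 'rV[R]_m) z X :
  derivable u z X -> derivable v z X -> derivable (fun w => dot (u w) (v w)) z X.
Proof.
move=> du dv; rewrite dot_fun; apply: derivable_sum => i.
by apply: derivableM; apply: derivable_entry.
Qed.

Lemma derive_dot (u v : V -> 'rV[R]_m) z X :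
  derivable u z X -> derivable v z X ->
  derive (fun w => dot (u w) (v w)) z X = dot (derive u z X) (v z) + dot (u z) (derive v z X).
Proof.
move=> du dv; rewrite dot_fun derive_sum; last first.
  by move=> i; apply: derivableM; apply: derivable_entry.
rewrite /dot -big_split; apply: eq_bigr => i _.
rewrite deriveM; try by apply: derivable_entry.
rewrite (entry_derive' 0 i du) (entry_derive' 0 i dv).
rewrite /GRing.scale /=. ring.
Qed.

Lemma jac_derive (g : V -> 'rV[R]_m) z v :
  differentiable g z -> derive g z v = v *m jac g z.
Proof.
move=> dg; rewrite deriveEjacobian //; congr (_ *m _).
by apply/matrixP => i j; rewrite !mxE deriveE.
Qed.

Lemma row_jac (g : V -> 'rV[R]_m) z i : row i (jac g z) = derive g z (delta_mx 0 i).
Proof. by apply/rowP => j; rewrite !mxE. Qed.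

Lemma entry_dot p q (M : 'M[R]_(p, m)) (N : 'M[R]_(q, m)) i j :
  (M *m N^T) i j = dot (row i M) (row j N).
Proof. by rewrite /dot mxE; apply: eq_bigr => k _; rewrite !mxE. Qed.

Lemma rv_entry_dot q (B : 'rV[R]_m) (N : 'M[R]_(q, m)) k :
  (B *m N^T) 0 k = dot B (row k N).
Proof. by rewrite /dot mxE; apply: eq_bigr => l _; rewrite !mxE. Qed.

Lemma rows_eq0 q (A B : 'rV[R]_m) (J T : 'M[R]_(q, m)) :
  (forall k, dot A (row k T) + dot (row k J) B = 0) -> B *m J^T + A *m T^T = 0.
Proof.
move=> h; apply/rowP => k; rewrite [RHS]mxE -(h k) /dot [LHS]mxE addrC.
by congr (_ + _); rewrite mxE; apply: eq_bigr => l _; rewrite !mxE // mulrC.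
Qed.

Lemma dot_delta (J : 'M[R]_(n, m)) (B : 'rV[R]_m) k :
  dot B (delta_mx 0 k *m J) = (B *m J^T) 0 k.
Proof. by rewrite entry_dot -rowE; congr dot; apply/rowP => j; rewrite !mxE. Qed.

Variables (U : set V) (f tau : V -> 'rV[R]_m).
Hypotheses (oU : open U) (sf : smooth_on U f) (st : smooth_on U tau)
  (bend : inf_bending U f tau).

Let df z : U z -> differentiable f z := @sf [::] z.
Let dt z : U z -> differentiable tau z := @st [::] z.
Let dfY Y z : U z -> differentiable (fun w => derive f w Y) z := @sf [:: Y] z.
Let dtY Y z : U z -> differentiable (fun w => derive tau w Y) z := @st [:: Y] z.
Let dfXY X Y z : U z -> differentiable (fun w => D2 w f X Y) z := @sf [:: X; Y] z.
Let dtXY X Y z : U z -> differentiable (fun w => D2 w tau X Y) z := @st [:: X; Y] z.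

Lemma polar z Y Z : U z ->
  dot (derive f z Y) (derive tau z Z) + dot (derive f z Z) (derive tau z Y) = 0.
Proof.
move=> Uz; have b := bend Uz.
have bYZ := b (Y + Z); have bY := b Y; have bZ := b Z.
have dfz := df Uz; have dtz := dt Uz.
rewrite !(jac_derive _ dfz) !(jac_derive _ dtz) in bYZ bY bZ *.
rewrite mulmxDl mulmxDl dotDl !dotDr in bYZ.
lra.
Qed.

Lemma D2sym_f z X Y : U z -> D2 z f X Y = D2 z f Y X.
Proof. by move=> Uz; exact: (@schwarz _ _ _ f U z X Y oU sf Uz). Qed.

Lemma D2sym_t z X Y : U z -> D2 z tau X Y = D2 z tau Y X.
Proof. by move=> Uz; exact: (@schwarz _ _ _ tau U z X Y oU st Uz). Qed.

Lemma gamma z X Y Z : U z ->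
  dot (D2 z f X Y) (derive tau z Z) + dot (derive f z Z) (D2 z tau X Y) = 0.
Proof.
move=> Uz.
pose hh Y Z := fun w => dot (derive f w Y) (derive tau w Z) + dot (derive f w Z) (derive tau w Y).
have H0 Y' Z' X' : derive (hh Y' Z') z X' = 0.
  have nz : \forall w \near z, hh Y' Z' w = (cst 0 : V -> R) w.
    have oUz : \forall w \near z, U w := @oU z Uz.
    by apply: (filterS _ oUz) => w Uw; apply: polar.
  by rewrite (near_eq_derive _ nz) derive_cst.
have Dh Y' Z' X' : derive (hh Y' Z') z X' =
    dot (D2 z f X' Y') (derive tau z Z') + dot (derive f z Y') (D2 z tau X' Z') +
    (dot (D2 z f X' Z') (derive tau z Y') + dot (derive f z Z') (D2 z tau X' Y')).
  rewrite /hh deriveD; last 2 first.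
  - by apply: derivable_dot; apply: diff_derivable; [apply: dfY|apply: dtY].
  - by apply: derivable_dot; apply: diff_derivable; [apply: dfY|apply: dtY].
  rewrite !derive_dot //; apply: diff_derivable; by [apply: dfY|apply: dtY].
have e1 := H0 Y Z X; have e2 := H0 X Z Y; have e3 := H0 X Y Z.
rewrite Dh in e1; rewrite Dh in e2; rewrite Dh in e3.
rewrite (D2sym_f Y X Uz) (D2sym_t Y X Uz) in e2.
rewrite (D2sym_f Z X Uz) (D2sym_t Z X Uz) (D2sym_f Z Y Uz) (D2sym_t Z Y Uz) in e3.
exact: (lin6 e1 e2 e3).
Qed.


Lemma Qsym x V' X Y Z : U x ->
  dot (D2 x f X Y) (D2 x tau V' Z) + dot (D2 x f V' Z) (D2 x tau X Y) =
  dot (D2 x f V' Y) (D2 x tau X Z) + dot (D2 x f X Z) (D2 x tau V' Y).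
Proof.
move=> Ux.
pose gg X Y Z := fun w => dot (D2 w f X Y) (derive tau w Z) + dot (derive f w Z) (D2 w tau X Y).
have H0 X' Y' Z' V2 : derive (gg X' Y' Z') x V2 = 0.
  have nz : \forall w \near x, gg X' Y' Z' w = (cst 0 : V -> R) w.
    have oUx : \forall w \near x, U w := @oU x Ux.
    by apply: (filterS _ oUx) => w Uw; apply: gamma.
  by rewrite (near_eq_derive _ nz) derive_cst.
have Dg X' Y' Z' V2 : derive (gg X' Y' Z') x V2 =
    dot (derive (fun w => D2 w f X' Y') x V2) (derive tau x Z') +
    dot (D2 x f X' Y') (D2 x tau V2 Z') +
    (dot (D2 x f V2 Z') (D2 x tau X' Y') +
     dot (derive f x Z') (derive (fun w => D2 w tau X' Y') x V2)).
  have d1 : derivable (fun w => D2 w f X' Y') x V2 by apply: diff_derivable; apply: dfXY.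
  have d2 : derivable (fun w => derive tau w Z') x V2 by apply: diff_derivable; apply: dtY.
  have d3 : derivable (fun w => derive f w Z') x V2 by apply: diff_derivable; apply: dfY.
  have d4 : derivable (fun w => D2 w tau X' Y') x V2 by apply: diff_derivable; apply: dtXY.
  rewrite /gg deriveD; [|exact: derivable_dot d1 d2|exact: derivable_dot d3 d4].
  by rewrite (derive_dot d1 d2) (derive_dot d3 d4).
have cs (g : V -> 'rV[R]_m) : smooth_on U g ->
    derive (fun w => D2 w g X Y) x V' = derive (fun w => D2 w g V' Y) x X.
  move=> sg.
  exact: (@schwarz _ _ _ (Dn [:: Y] g) U x V' X oU (@smooth_Dn _ _ _ U g [:: Y] sg) Ux).
have e1 := H0 X Y Z V'; have e2 := H0 V' Y Z X.
rewrite Dg in e1; rewrite Dg in e2.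
exact: (lin4 e1 e2 (congr1 (fun c => dot c (derive tau x Z)) (cs f sf))
   (congr1 (fun c => dot (derive f x Z) c) (cs tau st))).
Qed.

Lemma dot_self_eq0 (w : 'rV[R]_m) : dot w w = 0 -> w = 0.
Proof.
move=> h; apply/rowP => i; rewrite mxE.
have hs : \sum_(k < m) w ord0 k * w ord0 k = 0 := h.
have H : forall k : 'I_m, true -> w ord0 k * w ord0 k = 0.
  apply/psumr_eq0P; last by rewrite hs.
  by move=> k _; rewrite -expr2 sqr_ge0.
by move/eqP: (H i isT); rewrite mulf_eq0 orbb => /eqP.
Qed.


Lemma unitG x : U x -> immersion_on U f -> (jac f x *m (jac f x)^T) \in unitmx.
Proof.
move=> Ux imm; rewrite -row_free_unit; apply: inj_row_free => v hv.
apply: (imm x Ux); rewrite (jac_derive _ (df Ux)); apply: dot_self_eq0.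
by rewrite dotE trmx_mul mulmxA -(mulmxA v) hv mul0mx mxE.
Qed.

Lemma HK x : U x -> jac f x *m (jac tau x)^T + jac tau x *m (jac f x)^T = 0.
Proof.
move=> Ux; apply/matrixP => i j.
have addE p q (A B : 'M[R]_(p, q)) k1 l1 : (A + B) k1 l1 = A k1 l1 + B k1 l1 by rewrite mxE.
rewrite addE !entry_dot !row_jac [RHS]mxE (dotC (derive tau x _)).
exact: polar.
Qed.

Lemma H2 x X Y : U x ->
  D2 x tau X Y *m (jac f x)^T + D2 x f X Y *m (jac tau x)^T = 0.
Proof.
move=> Ux; apply: rows_eq0 => k; rewrite !row_jac.
exact: gamma.
Qed.

Lemma beta_eq x X Z : U x -> beta f tau x X Z =
  let J := jac f x in let iG := invmx (J *m J^T) in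
  let B := D2 x tau X Z - D2 x f X Z *m J^T *m iG *m jac tau x in
  B - B *m J^T *m iG *m J.
Proof.
move=> Ux.
have E : derive tau x (nablaXY f x X Z) = nablaXY f x X Z *m jac tau x.
  exact: jac_derive (dt Ux).
by rewrite /beta /Bform E.
Qed.

Lemma ML_geo x X Z Y W : U x -> immersion_on U f ->
  dot (sff f x X Z) (beta f tau x Y W) + dot (beta f tau x X Z) (sff f x Y W) =
  dot (D2 x f X Z) (D2 x tau Y W) + dot (D2 x tau X Z) (D2 x f Y W).
Proof.
move=> Ux imm.
rewrite (beta_eq X Z Ux) (beta_eq Y W Ux).
exact: (ML (unitG Ux imm) (HK Ux) (H2 X Z Ux) (H2 Y W Ux)).
Qed.

End Geo.

Unset Implicit Arguments.

Lemma fin4 (R : realType) (p q r s q' r' : R) :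
  p + q' = r' + s -> q' = q -> r' = r -> s + r = p + q.
Proof. move=> *; lra. Qed.

Lemma flat_red (R : realType) m (a1 b1 a2 b2 a3 b3 a4 b4 : 'rV[R]_m) :
  dot a3 b4 + dot b3 a4 = dot a1 b2 + dot b1 a2 ->
  ip2 (a1 + b1, a1 - b1) (a2 + b2, a2 - b2) - ip2 (a3 + b3, a3 - b3) (a4 + b4, a4 - b4) = 0.
Proof.
rewrite /ip2 /= => H; rewrite !(dotBl, dotBr, dotDl, dotDr, dotNl, dotNr); lra.
Qed.

Theorem lemma13 (R : realType) (n p : nat) (U : set 'rV[R]_n)
  (f tau : 'rV[R]_n -> 'rV[R]_(n + p)) :
  open U ->
  smooth_on U f -> immersion_on U f ->
  smooth_on U tau -> inf_bending U f tau ->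
  forall x, U x -> flat (theta f tau x) (@ip2 R (n + p)).
Proof.
move=> oU sf imm st bend x Ux X Y Z W.
apply: flat_red.
apply: (etrans (ML_geo oU sf st bend X W Y Z Ux imm)).
apply: (etrans _ (esym (ML_geo oU sf st bend X Z Y W Ux imm))).
exact: (@fin4 _ _ _ _ _ _ _ (Qsym oU sf st bend Y X Z W Ux) (dotC _ _) (dotC _ _)).
Qed.
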